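(* Let $n\ge1$, $m\ge0$ be integers and $a,b>0$. For $s\in[0,a)$ let $I_{m,n,s}(x)=\int_s^x(1+t)^nt^m\,dt$, $\mu_s=\frac{(1+a)^na^mb+nI_{m,n-1,s}(a)}{I_{m,n,s}(a)}$ and $$\tilde\psi_s(x)=\frac{\mu_sI_{m,n,s}(x)-nI_{m,n-1,s}(x)}{(1+x)^nx^m},$$ which is the solution of $\psi'(x)+\psi(x)\big(\frac{n}{1+x}+\frac mx\big)=\mu_s-\frac{n}{1+x}$ with $\psi(s)=0$, $\psi(a)=b$. The following are equivalent: (1) $\mu_s(1+s)\ge n$; (2) $\tilde\psi_s(x)>0$ for all $x\in(s,a]$; (3) $\tilde\psi_s'(x)>0$ for all $x\in(s,a]$. Moreover, $\lim_{x\to s^+}\tilde\psi_s'(x)$ exists and is strictly positive if and only if $\mu_s(1+s)>n$. *)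

(* Defs.v *)
From Stdlib Require Import Reals.
From Coquelicot Require Import Coquelicot.
Open Scope R_scope.

Definition Iint (m n : nat) (s x : R) : R :=
  RInt (fun t => (1 + t) ^ n * t ^ m) s x.

Definition mu (n m : nat) (a b s : R) : R :=
  ((1 + a) ^ n * a ^ m * b + INR n * Iint m (n - 1) s a) / Iint m n s a.

Definition psi (n m : nat) (a b s : R) (x : R) : R :=
  (mu n m a b s * Iint m n s x - INR n * Iint m (n - 1) s x)
    / ((1 + x) ^ n * x ^ m).

(* Main.v *)
Require Import Defs.
From Stdlib Require Import Reals Lra Lia.
From Coquelicot Require Import Coquelicot.
Open Scope R_scope.


Definition P (n m : nat) (t : R) : R := (1 + t) ^ n * t ^ m.

Lemma P_cont n m x : continuous (P n m) x.
Proof. apply (@ex_derive_continuous R_AbsRing R_NormedModule). unfold P. auto_derive. auto. Qed.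

Lemma P_exRInt n m u v : ex_RInt (P n m) u v.
Proof. apply (@ex_RInt_continuous R_CompleteNormedModule); intros; apply P_cont. Qed.

Lemma RInt_der n m s x : is_derive (fun y => RInt (P n m) s y) x (P n m x).
Proof.
  apply is_derive_RInt with (a := s).
  - apply filter_forall; intros; apply RInt_correct, P_exRInt.
  - apply P_cont.
Qed.

Lemma P_pos n m t : 0 < t -> 0 < P n m t.
Proof. intros; unfold P; apply Rmult_lt_0_compat; apply pow_lt; lra. Qed.

Lemma P_nonneg n m t : 0 <= t -> 0 <= P n m t.
Proof. intros; unfold P; apply Rmult_le_pos; apply pow_le; lra. Qed.

Lemma P_mono n m t y : 0 <= t <= y -> P n m t <= P n m y.
Proof.
  intros; unfold P; apply Rmult_le_compat; try (apply pow_le; lra);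
  apply pow_incr; lra.
Qed.

Lemma P_S k m t : P (S k) m t = (1 + t) * P k m t.
Proof. unfold P; simpl; ring. Qed.

Definition NN k m s mu x :=
  mu * RInt (P (S k) m) s x - INR (S k) * RInt (P k m) s x.

Lemma NN_der k m s mu x :
  is_derive (NN k m s mu) x (P k m x * (mu * (1 + x) - INR (S k))).
Proof.
  unfold NN.
  replace (P k m x * (mu * (1 + x) - INR (S k))) with
    (mu * P (S k) m x - INR (S k) * P k m x) by (rewrite P_S; ring).
  apply (is_derive_minus (fun y => mu * RInt (P (S k) m) s y)
     (fun y => INR (S k) * RInt (P k m) s y));
  apply is_derive_scal; apply RInt_der.
Qed.

Lemma dNN_cont k m mu x :
  continuous (fun x => P k m x * (mu * (1 + x) - INR (S k))) x.
Proof. apply (@ex_derive_continuous R_AbsRing R_NormedModule). unfold P. auto_derive. auto. Qed.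

Lemma NN_s k m s mu : NN k m s mu s = 0.
Proof. unfold NN. rewrite !RInt_point. unfold zero; simpl; ring. Qed.

Lemma NN_RInt k m s mu x :
  NN k m s mu x = RInt (fun t => P k m t * (mu * (1 + t) - INR (S k))) s x.
Proof.
  symmetry. apply (@is_RInt_unique R_CompleteNormedModule).
  replace (NN k m s mu x) with (minus (NN k m s mu x) (NN k m s mu s)).
  2:{ rewrite NN_s. unfold minus, plus, opp, zero; simpl; ring. }
  apply (@is_RInt_derive R_CompleteNormedModule).
  - intros; apply NN_der.
  - intros; apply dNN_cont.
Qed.

Lemma P_der k m x : 0 < x ->
  is_derive (P (S k) m) x (P (S k) m x * (INR (S k) / (1 + x) + INR m / x)).
Proof.
  intros Hx. unfold P. auto_derive. auto.
  change (match k with 0%nat => 1 | S _ => INR k + 1 end) with (INR (S k)).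
  change ((1 + x) ^ S k) with ((1 + x) * (1 + x) ^ k).
  destruct m as [|m'].
  - change (INR 0) with 0. field. lra.
  - cbn [Init.Nat.pred]. change (x ^ S m') with (x * x ^ m'). field. lra.
Qed.

Definition Psi k m s mu x := NN k m s mu x / P (S k) m x.
Definition gg k m x := INR (S k) / (1 + x) + INR m / x.
Definition DPsi k m s mu x := (mu - INR (S k) / (1 + x)) - Psi k m s mu x * gg k m x.

Lemma Psi_der k m s mu x : 0 < x -> is_derive (Psi k m s mu) x (DPsi k m s mu x).
Proof.
  intros Hx.
  assert (Hp := P_pos k m x Hx).
  assert (H := is_derive_div _ _ x _ _ (NN_der k m s mu x) (P_der k m x Hx)
                 (Rgt_not_eq _ _ (P_pos (S k) m x Hx))).
  unfold Psi, DPsi, gg. 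
  match goal with |- is_derive _ _ ?v => replace v with
     ((P k m x * (mu * (1 + x) - INR (S k)) * P (S k) m x -
        NN k m s mu x * (P (S k) m x * (INR (S k) / (1 + x) + INR m / x))) /
       P (S k) m x ^ 2) end.
  - exact H.
  - unfold Psi. rewrite P_S. field. repeat split; lra.
Qed.

Lemma Psi_derive k m s mu x : 0 < x -> Derive (Psi k m s mu) x = DPsi k m s mu x.
Proof. intros; apply is_derive_unique, Psi_der; auto. Qed.

Lemma mvt F dF z y : z < y -> (forall c, z <= c <= y -> is_derive F c (dF c)) ->
  exists c, z <= c <= y /\ F y - F z = dF c * (y - z).
Proof.
  intros Hzy Hd.
  destruct (MVT_gen F z y dF) as [c [Hc E]].
  - intros c Hc. rewrite Rmin_left in Hc by lra. rewrite Rmax_right in Hc by lra.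
    apply Hd; lra.
  - intros c Hc. rewrite Rmin_left in Hc by lra. rewrite Rmax_right in Hc by lra.
    apply continuity_pt_filterlim.
    apply (@ex_derive_continuous R_AbsRing R_NormedModule).
    exists (dF c). apply Hd; lra.
  - rewrite Rmin_left in Hc by lra. rewrite Rmax_right in Hc by lra.
    exists c; split; auto.
Qed.

Lemma strict_incr F dF u v : u < v -> (forall c, u <= c <= v -> is_derive F c (dF c)) ->
  (forall c, u <= c <= v -> 0 <= dF c) -> (forall c, u < c <= v -> 0 < dF c) ->
  F u < F v.
Proof.
  intros Huv Hd H0 H1.
  destruct (mvt F dF u ((u+v)/2)) as [c1 [Hc1 E1]]; [lra| intros; apply Hd; lra |].
  destruct (mvt F dF ((u+v)/2) v) as [c2 [Hc2 E2]]; [lra| intros; apply Hd; lra |].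
  assert (0 <= dF c1) by (apply H0; lra).
  assert (0 < dF c2) by (apply H1; lra).
  assert (0 <= dF c1 * ((u + v) / 2 - u)) by (apply Rmult_le_pos; lra).
  assert (0 < dF c2 * (v - (u + v) / 2)) by (apply Rmult_lt_0_compat; lra).
  lra.
Qed.

Lemma exp_pow_INR u n : exp u ^ n = exp (INR n * u).
Proof.
  induction n.
  - simpl. rewrite Rmult_0_l, exp_0. reflexivity.
  - rewrite S_INR. simpl. rewrite IHn, <- exp_plus. f_equal. ring.
Qed.

Lemma P_exp_bound n m t x : 0 < t -> 0 < x ->
  P n m t <= P n m x * exp ((INR n / (1 + x) + INR m / x) * (t - x)).
Proof.
  intros Ht Hx.
  assert (A : 1 + t <= (1 + x) * exp ((t - x) / (1 + x))).
  { assert (H := exp_ineq1_le ((t - x) / (1 + x))).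
    replace (1 + t) with ((1 + x) * (1 + (t - x) / (1 + x))) by (field; lra).
    apply Rmult_le_compat_l; lra. }
  assert (B : t <= x * exp ((t - x) / x)).
  { assert (H := exp_ineq1_le ((t - x) / x)).
    replace t with (x * (1 + (t - x) / x)) at 1 by (field; lra).
    apply Rmult_le_compat_l; lra. }
  unfold P.
  replace ((INR n / (1 + x) + INR m / x) * (t - x)) with
    (INR n * ((t - x) / (1 + x)) + INR m * ((t - x) / x)) by (field; lra).
  rewrite exp_plus, <- !exp_pow_INR.
  replace ((1 + x) ^ n * x ^ m * (exp ((t - x) / (1 + x)) ^ n * exp ((t - x) / x) ^ m))
    with (((1 + x) * exp ((t - x) / (1 + x))) ^ n * (x * exp ((t - x) / x)) ^ m)
    by (rewrite !Rpow_mult_distr; ring).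
  apply Rmult_le_compat; try (apply pow_le; lra); apply pow_incr; lra.
Qed.

Lemma key_ineq k m s x : 0 <= s < x ->
  RInt (P (S k) m) s x * gg k m x < P (S k) m x.
Proof.
  intros Hsx.
  set (G := gg k m x). set (Px := P (S k) m x).
  assert (HG : 0 < G).
  { unfold G, gg. assert (0 < INR (S k)) by (apply lt_0_INR; lia).
    assert (0 <= INR m) by apply pos_INR.
    assert (0 < INR (S k) / (1 + x)) by (apply Rdiv_lt_0_compat; lra).
    assert (0 <= INR m / x) by (apply Rdiv_le_0_compat; lra). lra. }
  assert (HPx : 0 < Px) by (apply P_pos; lra).
  assert (E : RInt (fun t => Px * exp (G * (t - x))) s x = Px * (1 - exp (G * (s - x))) / G).
  { apply (@is_RInt_unique R_CompleteNormedModule).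
    replace (Px * (1 - exp (G * (s - x))) / G) with
      (minus (Px * exp (G * (x - x)) / G) (Px * exp (G * (s - x)) / G)).
    2:{ unfold minus, plus, opp; simpl. replace (G * (x - x)) with 0 by ring.
        rewrite exp_0. field. lra. }
    apply (@is_RInt_derive R_CompleteNormedModule
      (fun t => Px * exp (G * (t - x)) / G)).
    - intros t _. auto_derive. auto. unfold Rminus. field. lra.
    - intros t _. apply (@ex_derive_continuous R_AbsRing R_NormedModule). auto_derive. auto. }
  assert (Hle : RInt (P (S k) m) s x <= RInt (fun t => Px * exp (G * (t - x))) s x).
  { apply RInt_le; try lra.
    - apply P_exRInt.
    - apply (@ex_RInt_continuous R_CompleteNormedModule). intros; 
      apply (@ex_derive_continuous R_AbsRing R_NormedModule). auto_derive. auto.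
    - intros t Ht. unfold Px, G, gg. apply P_exp_bound; lra. }
  rewrite E in Hle.
  assert (0 < exp (G * (s - x))) by apply exp_pos.
  apply Rmult_le_compat_r with (r := G) in Hle; [|lra].
  replace (Px * (1 - exp (G * (s - x))) / G * G) with (Px - Px * exp (G * (s - x))) in Hle
    by (field; lra).
  assert (0 < Px * exp (G * (s - x))) by (apply Rmult_lt_0_compat; lra).
  lra.
Qed.

Definition dN k m mu t := P k m t * (mu * (1 + t) - INR (S k)).

Lemma dN_exRInt k m mu u v : ex_RInt (dN k m mu) u v.
Proof. apply (@ex_RInt_continuous R_CompleteNormedModule); intros; apply dNN_cont. Qed.

Lemma RInt_upper f s y c : s <= y -> ex_RInt f s y ->
  (forall t, s < t < y -> f t <= c) -> RInt f s y <= c * (y - s).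
Proof.
  intros Hsy Hex H.
  replace (c * (y - s)) with (RInt (fun _ => c) s y).
  - apply RInt_le; auto. apply ex_RInt_const.
  - rewrite RInt_const. apply Rmult_comm.
Qed.

Lemma RInt_lower f s y c : s <= y -> ex_RInt f s y ->
  (forall t, s < t < y -> c <= f t) -> c * (y - s) <= RInt f s y.
Proof.
  intros Hsy Hex H.
  replace (c * (y - s)) with (RInt (fun _ => c) s y).
  - apply RInt_le; auto. apply ex_RInt_const.
  - rewrite RInt_const. apply Rmult_comm.
Qed.

Lemma div_ge c N X : 0 < X -> c * X <= N -> c <= N / X.
Proof.
  intros HX H. apply Rmult_le_reg_r with X; auto.
  unfold Rdiv. rewrite Rmult_assoc, Rinv_l by lra. lra.
Qed.

Lemma div_le c N X : 0 < X -> N <= c * X -> N / X <= c.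
Proof.
  intros HX H. apply Rmult_le_reg_r with X; auto.
  unfold Rdiv. rewrite Rmult_assoc, Rinv_l by lra. lra.
Qed.

Lemma NN_dN k m s mu y : NN k m s mu y = RInt (dN k m mu) s y.
Proof. apply NN_RInt. Qed.

Lemma INRS_pos k : 0 < INR (S k).
Proof. apply lt_0_INR; lia. Qed.

Lemma Psi_lower k m s mu y : 0 <= s < y -> 0 <= mu ->
  - INR (S k) * (y - s) <= Psi k m s mu y.
Proof.
  intros Hs Hmu.
  assert (HP := P_pos k m y ltac:(lra)).
  assert (Hn := INRS_pos k).
  assert (H : (- INR (S k) * P k m y) * (y - s) <= NN k m s mu y).
  { rewrite NN_dN. apply RInt_lower; [lra | apply dN_exRInt |].
    intros t Ht. unfold dN.
    assert (P k m t <= P k m y) by (apply P_mono; lra).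
    assert (0 <= P k m t) by (apply P_nonneg; lra).
    assert (0 <= mu * (1 + t)) by (apply Rmult_le_pos; lra).
    nra. }
  unfold Psi. rewrite P_S.
  assert (0 < (1 + y) * P k m y) by (apply Rmult_lt_0_compat; lra).
  apply div_ge; auto. assert (0 <= INR (S k) * (y - s) * P k m y) by (apply Rmult_le_pos; [apply Rmult_le_pos|]; lra). nra.
Qed.

Lemma Psi_upper k m s mu y : 0 <= s < y -> 0 <= mu ->
  Psi k m s mu y <= mu * (y - s).
Proof.
  intros Hs Hmu.
  assert (HP := P_pos k m y ltac:(lra)).
  assert (Hn := INRS_pos k).
  assert (H : NN k m s mu y <= (mu * (1 + y) * P k m y) * (y - s)).
  { rewrite NN_dN. apply RInt_upper; [lra | apply dN_exRInt |].
    intros t Ht. unfold dN.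
    assert (P k m t <= P k m y) by (apply P_mono; lra).
    assert (0 <= P k m t) by (apply P_nonneg; lra).
    assert (mu * (1 + t) <= mu * (1 + y)) by (apply Rmult_le_compat_l; lra).
    assert (0 <= mu * (1 + t)) by (apply Rmult_le_pos; lra).
    nra. }
  unfold Psi. rewrite P_S.
  assert (0 < (1 + y) * P k m y) by (apply Rmult_lt_0_compat; lra).
  apply div_le; auto.
  replace (mu * (y - s) * ((1 + y) * P k m y)) with (mu * (1 + y) * P k m y * (y - s)) by ring.
  lra.
Qed.

Lemma Psi_upper2 k m s mu y : 0 <= s < y -> 0 <= mu -> mu * (1 + s) <= INR (S k) ->
  Psi k m s mu y <= mu * (y - s) ^ 2.
Proof.
  intros Hs Hmu Hc.
  assert (HP := P_pos k m y ltac:(lra)).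
  assert (H : NN k m s mu y <= (mu * (y - s) * P k m y) * (y - s)).
  { rewrite NN_dN. apply RInt_upper; [lra | apply dN_exRInt |].
    intros t Ht. unfold dN.
    assert (P k m t <= P k m y) by (apply P_mono; lra).
    assert (0 <= P k m t) by (apply P_nonneg; lra).
    assert (mu * (1 + t) - mu * (1 + s) = mu * (t - s)) by ring.
    assert (mu * (1 + t) - INR (S k) <= mu * (t - s)) by lra.
    assert (mu * (t - s) <= mu * (y - s)) by (apply Rmult_le_compat_l; lra).
    assert (0 <= mu * (t - s)) by (apply Rmult_le_pos; lra).
    assert (P k m t * (mu * (1 + t) - INR (S k)) <= P k m t * (mu * (t - s)))
      by (apply Rmult_le_compat_l; lra).
    nra. }
  unfold Psi. rewrite P_S.
  assert (0 < (1 + y) * P k m y) by (apply Rmult_lt_0_compat; lra).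
  assert (0 <= mu * (y - s) ^ 2) by (apply Rmult_le_pos; [lra | apply pow2_ge_0]).
  apply div_le; auto.
  assert (0 <= mu * (y - s) ^ 2 * P k m y * y) by
    (apply Rmult_le_pos; [apply Rmult_le_pos|]; lra).
  assert (mu * (y - s) ^ 2 * ((1 + y) * P k m y) =
     mu * (y - s) * P k m y * (y - s) + mu * (y - s) ^ 2 * P k m y * y) by ring.
  lra.
Qed.

Lemma NN_der' k m s mu x : is_derive (NN k m s mu) x (dN k m mu x).
Proof. apply NN_der. Qed.

Lemma Psi_pos k m s mu x : 0 <= s < x -> 0 < mu -> INR (S k) <= mu * (1 + s) ->
  0 < Psi k m s mu x.
Proof.
  intros Hs Hmu Hc.
  assert (H : NN k m s mu s < NN k m s mu x).
  { apply (strict_incr _ (dN k m mu) s x); [lra | intros; apply NN_der' | |].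
    - intros c Hc'. unfold dN. apply Rmult_le_pos. apply P_nonneg; lra.
      assert (mu * (1 + s) <= mu * (1 + c)) by (apply Rmult_le_compat_l; lra). lra.
    - intros c Hc'. unfold dN. apply Rmult_lt_0_compat. apply P_pos; lra.
      assert (mu * (1 + s) < mu * (1 + c)) by (apply Rmult_lt_compat_l; lra). lra. }
  rewrite NN_s in H. unfold Psi. apply Rdiv_lt_0_compat; auto. apply P_pos; lra.
Qed.

Lemma Psi_neg k m s mu x0 : 0 <= s < x0 -> 0 < mu -> mu * (1 + s) < INR (S k) ->
  exists x, s < x <= x0 /\ Psi k m s mu x < 0.
Proof.
  intros Hs Hmu Hc.
  set (d := (INR (S k) - mu * (1 + s)) / (2 * mu)).
  assert (Hd : 0 < d) by (unfold d; apply Rdiv_lt_0_compat; lra).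
  assert (Hmd : mu * d = (INR (S k) - mu * (1 + s)) / 2) by (unfold d; field; lra).
  set (x := Rmin x0 (s + d)).
  assert (Hx1 : x <= x0) by apply Rmin_l.
  assert (Hx2 : x <= s + d) by apply Rmin_r.
  assert (Hx3 : s < x) by (unfold x; apply Rmin_glb_lt; lra).
  exists x. split; [lra|].
  assert (Hneg : forall c, s <= c <= x -> mu * (1 + c) < INR (S k)).
  { intros c Hc'. assert (mu * (1 + c) <= mu * (1 + s + d)) by (apply Rmult_le_compat_l; lra).
    assert (mu * (1 + s + d) = mu * (1 + s) + mu * d) by ring. lra. }
  assert (H : (fun y => - NN k m s mu y) s < (fun y => - NN k m s mu y) x).
  { apply (strict_incr (fun y => - NN k m s mu y) (fun y => - dN k m mu y) s x); [lra | | |].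
    - intros c _. apply (@is_derive_opp R_AbsRing R_NormedModule (NN k m s mu)).
      apply NN_der'.
    - intros c Hc'. unfold dN. assert (Hn := Hneg c Hc').
      assert (0 <= P k m c) by (apply P_nonneg; lra).
      assert (0 <= P k m c * (INR (S k) - mu * (1 + c))) by (apply Rmult_le_pos; lra).
      replace (P k m c * (mu * (1 + c) - INR (S k))) with
        (- (P k m c * (INR (S k) - mu * (1 + c)))) by ring. lra.
    - intros c Hc'. unfold dN. assert (Hn := Hneg c ltac:(lra)).
      assert (0 < P k m c) by (apply P_pos; lra).
      assert (0 < P k m c * (INR (S k) - mu * (1 + c))) by (apply Rmult_lt_0_compat; lra).
      replace (P k m c * (mu * (1 + c) - INR (S k))) with
        (- (P k m c * (INR (S k) - mu * (1 + c)))) by ring. lra. }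
  simpl in H. rewrite NN_s in H.
  unfold Psi. unfold Rdiv. 
  assert (0 < / P (S k) m x) by (apply Rinv_0_lt_compat, P_pos; lra).
  assert (NN k m s mu x < 0) by lra. nra.
Qed.

Lemma DPsi_pos k m s mu x : 0 <= s < x -> 0 < mu -> INR (S k) <= mu * (1 + s) ->
  0 < DPsi k m s mu x.
Proof.
  intros Hs Hmu Hc.
  set (phi := mu - INR (S k) / (1 + x)).
  assert (Hphi : 0 < phi).
  { unfold phi. assert (mu * (1 + s) < mu * (1 + x)) by (apply Rmult_lt_compat_l; lra).
    assert (INR (S k) / (1 + x) < mu). { apply Rmult_lt_reg_r with (1 + x); [lra|].
      unfold Rdiv. rewrite Rmult_assoc, Rinv_l by lra. lra. } lra. }
  assert (HN : NN k m s mu x <= phi * RInt (P (S k) m) s x).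
  { rewrite NN_dN.
    replace (phi * RInt (P (S k) m) s x) with (RInt (fun t => phi * P (S k) m t) s x).
    2:{ apply (RInt_scal (V := R_CompleteNormedModule)). apply P_exRInt. }
    apply RInt_le; [lra | apply dN_exRInt | |].
    - apply (@ex_RInt_continuous R_CompleteNormedModule). intros.
      apply (@ex_derive_continuous R_AbsRing R_NormedModule). unfold P. auto_derive. auto.
    - intros t Ht. unfold dN, phi. rewrite P_S.
      assert (HP : 0 < P k m t) by (apply P_pos; lra).
      assert (INR (S k) / (1 + x) <= INR (S k) / (1 + t)).
      { apply Rmult_le_compat_l. left; apply INRS_pos.
        apply Rinv_le_contravar; lra. }
      replace ((1 + t) * P k m t) with (P k m t * (1 + t)) by ring.
      replace (P k m t * (mu * (1 + t) - INR (S k))) with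
        ((P k m t * (1 + t)) * (mu - INR (S k) / (1 + t))) by (field; lra).
      rewrite (Rmult_comm (mu - INR (S k) / (1 + x))).
      apply Rmult_le_compat_l; [apply Rmult_le_pos; lra | lra]. }
  assert (HK := key_ineq k m s x Hs).
  assert (HPx : 0 < P (S k) m x) by (apply P_pos; lra).
  assert (Hg : 0 < gg k m x).
  { unfold gg. assert (Hn := INRS_pos k). assert (0 <= INR m) by apply pos_INR.
    assert (0 < INR (S k) / (1 + x)) by (apply Rdiv_lt_0_compat; lra).
    assert (0 <= INR m / x) by (apply Rdiv_le_0_compat; lra). lra. }
  unfold DPsi, Psi. fold phi.
  assert (A : NN k m s mu x * gg k m x <= phi * (RInt (P (S k) m) s x * gg k m x)).
  { rewrite <- Rmult_assoc. apply Rmult_le_compat_r; lra. }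
  assert (B : phi * (RInt (P (S k) m) s x * gg k m x) < phi * P (S k) m x).
  { apply Rmult_lt_compat_l; lra. }
  assert (C : NN k m s mu x / P (S k) m x * gg k m x < phi).
  { replace (NN k m s mu x / P (S k) m x * gg k m x) with
      (NN k m s mu x * gg k m x / P (S k) m x) by (field; lra).
    apply Rmult_lt_reg_r with (P (S k) m x); auto.
    unfold Rdiv. rewrite Rmult_assoc, Rinv_l by lra. lra. }
  lra.
Qed.

Lemma DPsi_imp_Psi k m s mu a : 0 <= s -> 0 <= mu ->
  (forall x, s < x <= a -> DPsi k m s mu x > 0) ->
  forall x, s < x <= a -> Psi k m s mu x > 0.
Proof.
  intros Hs Hmu HD.
  assert (Hlt : forall z y, s < z < y -> y <= a -> Psi k m s mu z < Psi k m s mu y).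
  { intros z y Hz Hy. apply (strict_incr _ (DPsi k m s mu)); [lra | | |].
    - intros c Hc. apply Psi_der; lra.
    - intros c Hc. left; apply HD; lra.
    - intros c Hc. apply HD; lra. }
  assert (Hnn : forall y, s < y <= a -> 0 <= Psi k m s mu y).
  { intros y Hy. destruct (Rle_or_lt 0 (Psi k m s mu y)) as [H|H]; auto. exfalso.
    assert (Hn := INRS_pos k).
    set (h := Rmin ((y - s) / 2) (- Psi k m s mu y / (2 * INR (S k)))).
    assert (Hh1 : h <= (y - s) / 2) by apply Rmin_l.
    assert (Hh2 : h <= - Psi k m s mu y / (2 * INR (S k))) by apply Rmin_r.
    assert (Hh0 : 0 < h).
    { unfold h. apply Rmin_glb_lt. lra. apply Rdiv_lt_0_compat; lra. }
    assert (HL := Psi_lower k m s mu (s + h) ltac:(lra) Hmu).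
    assert (Hz := Hlt (s + h) y ltac:(lra) ltac:(lra)).
    assert (INR (S k) * h <= - Psi k m s mu y / 2).
    { apply Rmult_le_compat_l with (r := INR (S k)) in Hh2; [|lra].
      replace (INR (S k) * (- Psi k m s mu y / (2 * INR (S k)))) with (- Psi k m s mu y / 2)
        in Hh2 by (field; lra). lra. }
    replace (- INR (S k) * (s + h - s)) with (- (INR (S k) * h)) in HL by ring.
    lra. }
  intros x Hx.
  assert (Hz := Hlt ((s + x) / 2) x ltac:(lra) ltac:(lra)).
  assert (Hz2 := Hnn ((s + x) / 2) ltac:(lra)). lra.
Qed.

Lemma lim_pos_imp k m s mu L d : 0 <= s -> 0 < mu -> 0 < L -> 0 < d ->
  (forall y, s < y < s + d -> DPsi k m s mu y > L / 2) ->
  INR (S k) < mu * (1 + s).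
Proof.
  intros Hs Hmu HL Hd HD.
  destruct (Rle_or_lt (mu * (1 + s)) (INR (S k))) as [Hc|Hc]; auto. exfalso.
  assert (Hn := INRS_pos k).
  set (h := Rmin (d / 2) (L / (8 * mu))).
  assert (Hh1 : h <= d / 2) by apply Rmin_l.
  assert (Hh2 : h <= L / (8 * mu)) by apply Rmin_r.
  assert (Hh0 : 0 < h) by (unfold h; apply Rmin_glb_lt; apply Rdiv_lt_0_compat; lra).
  set (t := L / (2 * L + 4 * INR (S k))).
  assert (Ht0 : 0 < t) by (unfold t; apply Rdiv_lt_0_compat; lra).
  assert (Ht1 : t < 1).
  { unfold t. apply Rmult_lt_reg_r with (2 * L + 4 * INR (S k)); [lra|].
    unfold Rdiv. rewrite Rmult_assoc, Rinv_l by lra. lra. }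
  assert (Htt : t * (L / 2 + INR (S k)) = L / 4) by (unfold t; field; lra).
  assert (Hth : 0 < t * h) by (apply Rmult_lt_0_compat; lra).
  assert (Hth2 : t * h < h).
  { replace h with (1 * h) at 2 by ring. apply Rmult_lt_compat_r; lra. }
  destruct (mvt (Psi k m s mu) (DPsi k m s mu) (s + t * h) (s + h)) as [c [Hc1 E]].
  { lra. }
  { intros c Hc'. apply Psi_der. lra. }
  assert (HDc := HD c ltac:(lra)).
  assert (Hlow := Psi_lower k m s mu (s + t * h) ltac:(lra) ltac:(lra)).
  assert (Hup := Psi_upper2 k m s mu (s + h) ltac:(lra) ltac:(lra) Hc).
  replace (s + h - (s + t * h)) with ((1 - t) * h) in E by ring.
  replace (s + t * h - s) with (t * h) in Hlow by ring.
  replace (s + h - s) with h in Hup by ring.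
  assert (H1 : L / 2 * ((1 - t) * h) <= DPsi k m s mu c * ((1 - t) * h)).
  { apply Rmult_le_compat_r. apply Rmult_le_pos; lra. lra. }
  assert (H2 : mu * h ^ 2 <= L / 8 * h).
  { replace (mu * h ^ 2) with ((mu * h) * h) by ring. apply Rmult_le_compat_r; [lra|].
    apply Rmult_le_compat_l with (r := mu) in Hh2; [|lra].
    replace (mu * (L / (8 * mu))) with (L / 8) in Hh2 by (field; lra). lra. }
  assert (H3 : L / 2 * ((1 - t) * h) - INR (S k) * (t * h) = L / 4 * h).
  { replace (L / 2 * ((1 - t) * h) - INR (S k) * (t * h)) with
      ((L / 2 - t * (L / 2 + INR (S k))) * h) by ring. rewrite Htt. field. }
  assert (0 < L / 8 * h) by (apply Rmult_lt_0_compat; lra).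
  replace (- INR (S k) * (t * h)) with (- (INR (S k) * (t * h))) in Hlow by ring.
  lra.
Qed.

Lemma lim_plus {T} {F} {FF : Filter F} (f g : T -> R) a b :
  filterlim f F (locally a) -> filterlim g F (locally b) ->
  filterlim (fun x => f x + g x) F (locally (a + b)).
Proof.
  intros Hf Hg. eapply filterlim_comp_2; eauto.
  apply (filterlim_plus (K := R_AbsRing) (V := R_NormedModule) a b).
Qed.

Lemma lim_mult {T} {F} {FF : Filter F} (f g : T -> R) a b :
  filterlim f F (locally a) -> filterlim g F (locally b) ->
  filterlim (fun x => f x * g x) F (locally (a * b)).
Proof.
  intros Hf Hg. eapply filterlim_comp_2; eauto.
  apply (filterlim_mult (K := R_AbsRing) a b).
Qed.

Lemma lim_minus {T} {F} {FF : Filter F} (f g : T -> R) a b :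
  filterlim f F (locally a) -> filterlim g F (locally b) ->
  filterlim (fun x => f x - g x) F (locally (a - b)).
Proof.
  intros Hf Hg.
  assert (H := lim_plus f (fun x => -1 * g x) a (-1 * b) Hf
    (lim_mult (fun _ => -1) g (-1) b (@filterlim_const T R_UniformSpace F FF (-1)) Hg)).
  replace (a - b) with (a + -1 * b) by ring.
  eapply filterlim_ext; [|exact H]. intros; simpl; ring.
Qed.

Lemma lim_cont (h : R -> R) s : continuous h s -> filterlim h (at_right s) (@locally R_UniformSpace (h s)).
Proof.
  intros H P HP. apply H in HP. unfold filtermap, at_right, within in *.
  apply filter_imp with (2 := HP). auto.
Qed.

Lemma Psi_lim0 k m s mu : 0 <= s -> 0 <= mu ->
  filterlim (Psi k m s mu) (at_right s) (locally 0).
Proof.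
  intros Hs Hmu. apply filterlim_locally. intros eps.
  assert (Hn := INRS_pos k).
  assert (Hd : 0 < eps / (mu + INR (S k) + 1)) by (apply Rdiv_lt_0_compat; [apply cond_pos|lra]).
  exists (mkposreal _ Hd). intros y Hy Hsy.
  change (Rabs (y - s) < eps / (mu + INR (S k) + 1)) in Hy.
  change (Rabs (Psi k m s mu y - 0) < eps).
  rewrite Rabs_pos_eq in Hy by lra.
  assert (HL := Psi_lower k m s mu y ltac:(lra) Hmu).
  assert (HU := Psi_upper k m s mu y ltac:(lra) Hmu).
  assert (E : (mu + INR (S k) + 1) * (eps / (mu + INR (S k) + 1)) = eps) by (field; lra).
  assert (A : (mu + INR (S k) + 1) * (y - s) < eps).
  { rewrite <- E. apply Rmult_lt_compat_l; lra. }
  assert (0 <= mu * (y - s)) by (apply Rmult_le_pos; lra).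
  assert (0 <= INR (S k) * (y - s)) by (apply Rmult_le_pos; lra).
  assert (mu * (y - s) + INR (S k) * (y - s) < eps) by nra.
  apply Rabs_def1; lra.
Qed.

Definition hh k mu t := (1 + t) ^ k * (mu * (1 + t) - INR (S k)).

Lemma NN0_lim k m mu :
  filterlim (fun y => NN k m 0 mu y / y ^ (S m)) (at_right 0)
    (@locally R_UniformSpace ((mu - INR (S k)) / INR (S m))).
Proof.
  apply filterlim_locally. intros eps.
  assert (Hc : continuous (hh k mu) 0).
  { apply (@ex_derive_continuous R_AbsRing R_NormedModule). unfold hh. auto_derive. auto. }
  assert (Heps2 : 0 < eps / 2) by (apply Rdiv_lt_0_compat; [apply cond_pos | lra]).
  destruct (proj1 (filterlim_locally _ _) Hc (mkposreal _ Heps2)) as [d Hd].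
  exists d. intros y Hy Hy0.
  change (Rabs (y - 0) < d) in Hy. rewrite Rminus_0_r, Rabs_pos_eq in Hy by lra.
  change (Rabs (NN k m 0 mu y / y ^ S m - (mu - INR (S k)) / INR (S m)) < eps).
  set (h0 := mu - INR (S k)).
  assert (Hh0 : hh k mu 0 = h0).
  { unfold hh, h0. rewrite Rplus_0_r, pow1. ring. }
  assert (HSm : 0 < INR (S m)) by (apply lt_0_INR; lia).
  assert (E : NN k m 0 mu y - h0 * y ^ S m / INR (S m) =
              RInt (fun t => t ^ m * (hh k mu t - h0)) 0 y).
  { symmetry. apply (@is_RInt_unique R_CompleteNormedModule).
    replace (NN k m 0 mu y - h0 * y ^ S m / INR (S m)) with
      (minus (NN k m 0 mu y - h0 * y ^ S m / INR (S m))
             (NN k m 0 mu 0 - h0 * 0 ^ S m / INR (S m))).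
    2:{ rewrite NN_s. unfold minus, plus, opp; simpl. field. exact (Rgt_not_eq _ _ HSm). }
    apply (@is_RInt_derive R_CompleteNormedModule
      (fun t => NN k m 0 mu t - h0 * t ^ S m / INR (S m))).
    - intros t _.
      replace (t ^ m * (hh k mu t - h0)) with
        (minus (dN k m mu t) (h0 * t ^ m)).
      2:{ unfold minus, plus, opp, dN, hh, P; simpl. ring. }
      apply (is_derive_minus (NN k m 0 mu) (fun t => h0 * t ^ S m / INR (S m))).
      + apply NN_der'.
      + auto_derive; auto.
        change (match m with 0%nat => 1 | S _ => INR m + 1 end) with (INR (S m)).
        simpl pred. field. lra.
    - intros t _. apply (@ex_derive_continuous R_AbsRing R_NormedModule).
      unfold hh. auto_derive. auto. }
  assert (B : Rabs (RInt (fun t => t ^ m * (hh k mu t - h0)) 0 y) <= (y - 0) * (y ^ m * (eps / 2))).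
  { apply abs_RInt_le_const; [lra | |].
    - apply (@ex_RInt_continuous R_CompleteNormedModule). intros.
      apply (@ex_derive_continuous R_AbsRing R_NormedModule). unfold hh. auto_derive. auto.
    - intros t Ht. rewrite Rabs_mult.
      apply Rmult_le_compat; try apply Rabs_pos.
      + rewrite <- RPow_abs. apply pow_incr. split; [apply Rabs_pos|].
        rewrite Rabs_pos_eq; lra.
      + rewrite <- Hh0. left. apply (Hd t).
        change (Rabs (t - 0) < d). rewrite Rminus_0_r, Rabs_pos_eq; lra. }
  rewrite <- E in B.
  assert (Hy' : 0 < y ^ S m) by (apply pow_lt; lra).
  replace (NN k m 0 mu y / y ^ S m - h0 / INR (S m)) with
    ((NN k m 0 mu y - h0 * y ^ S m / INR (S m)) / y ^ S m) by (field; lra).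
  rewrite Rabs_div by lra. rewrite (Rabs_pos_eq (y ^ S m)) by lra.
  apply Rmult_lt_reg_r with (y ^ S m); auto.
  unfold Rdiv at 1. rewrite Rmult_assoc, Rinv_l, Rmult_1_r by lra.
  replace ((y - 0) * (y ^ m * (eps / 2))) with (eps / 2 * y ^ S m) in B by (simpl; ring).
  assert (eps / 2 * y ^ S m < eps * y ^ S m).
  { apply Rmult_lt_compat_r; auto. destruct eps; simpl in *; lra. }
  lra.
Qed.

Lemma DPsi_ext k m s mu y : 0 < y -> DPsi k m s mu y =
  (mu - INR (S k) / (1 + y)) - Psi k m s mu y * (INR (S k) / (1 + y))
   - INR m * (Psi k m s mu y / y).
Proof. intros Hy. unfold DPsi, gg. field. lra. Qed.

Lemma cont_fun (h : R -> R) x : ex_derive h x -> continuous h x.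
Proof. apply (@ex_derive_continuous R_AbsRing R_NormedModule). Qed.

Lemma DPsi_lim_q k m s mu q : 0 <= s -> 0 <= mu ->
  filterlim (fun y => Psi k m s mu y / y) (at_right s) (@locally R_UniformSpace q) ->
  filterlim (DPsi k m s mu) (at_right s)
    (@locally R_UniformSpace ((mu - INR (S k) / (1 + s)) - 0 * (INR (S k) / (1 + s)) - INR m * q)).
Proof.
  intros Hs Hmu Hq.
  apply filterlim_ext_loc with
    (f := fun y => (mu - INR (S k) / (1 + y)) - Psi k m s mu y * (INR (S k) / (1 + y))
   - INR m * (Psi k m s mu y / y)).
  { unfold at_right, within. apply filter_forall. intros y Hy. rewrite DPsi_ext; auto. lra. }
  apply lim_minus; [apply lim_minus|].
  - apply (lim_cont (fun y => mu - INR (S k) / (1 + y))).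
    apply cont_fun. auto_derive. lra.
  - apply lim_mult. apply Psi_lim0; auto.
    apply (lim_cont (fun y => INR (S k) / (1 + y))).
    apply cont_fun. auto_derive. lra.
  - apply lim_mult; auto. apply filterlim_const.
Qed.

Lemma lim_exists k m s mu : 0 <= s -> 0 < mu -> INR (S k) < mu * (1 + s) ->
  exists L, filterlim (DPsi k m s mu) (at_right s) (@locally R_UniformSpace L) /\ 0 < L.
Proof.
  intros Hs Hmu Hc.
  destruct (Req_dec s 0) as [Hs0|Hs0].
  - subst s.
    set (q := (mu - INR (S k)) / INR (S m) * / (1 + 0) ^ S k).
    assert (Hq : filterlim (fun y => Psi k m 0 mu y / y) (at_right 0) (@locally R_UniformSpace q)).
    { apply filterlim_ext_loc with
        (f := fun y => NN k m 0 mu y / y ^ (S m) * / (1 + y) ^ S k).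
      { unfold at_right, within. apply filter_forall. intros y Hy.
        unfold Psi, P. change (y ^ S m) with (y * y ^ m).
        assert (y ^ m <> 0) by (apply pow_nonzero; lra).
        assert ((1 + y) ^ S k <> 0) by (apply pow_nonzero; lra).
        field. repeat split; auto; lra. }
      apply lim_mult. apply NN0_lim.
      apply (lim_cont (fun y => / (1 + y) ^ S k)).
      apply cont_fun. auto_derive. intro HH; apply (pow_nonzero (1 + 0) (S k)); [lra | exact HH]. }
    eexists; split. apply (DPsi_lim_q k m 0 mu q ltac:(lra) ltac:(lra) Hq).
    rewrite Rplus_0_r, Rmult_1_r in Hc.
    assert (HSm : INR (S m) = INR m + 1) by apply S_INR.
    assert (0 <= INR m) by apply pos_INR.
    assert (E : q = (mu - INR (S k)) / INR (S m)).
    { unfold q. rewrite Rplus_0_r, pow1. rewrite HSm. field. lra. }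
    rewrite E, Rplus_0_r.
    replace (mu - INR (S k) / 1 - 0 * (INR (S k) / 1) - INR m * ((mu - INR (S k)) / INR (S m)))
      with ((mu - INR (S k)) / INR (S m)) by (rewrite HSm; field; lra).
    apply Rdiv_lt_0_compat; lra.
  - assert (Hs' : 0 < s) by lra.
    assert (Hq : filterlim (fun y => Psi k m s mu y / y) (at_right s)
                   (@locally R_UniformSpace (0 * / s))).
    { apply lim_mult. apply Psi_lim0; lra.
      apply (lim_cont (fun y => / y)). apply cont_fun. auto_derive. lra. }
    eexists; split. apply (DPsi_lim_q k m s mu (0 * / s) ltac:(lra) ltac:(lra) Hq).
    replace (mu - INR (S k) / (1 + s) - 0 * (INR (S k) / (1 + s)) - INR m * (0 * / s))
      with ((mu * (1 + s) - INR (S k)) / (1 + s)) by (field; lra).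
    apply Rdiv_lt_0_compat; lra.
Qed.

Theorem lemma3p2 (n m : nat) (a b s : R)
  (hn : (1 <= n)%nat) (ha : 0 < a) (hb : 0 < b) (hs0 : 0 <= s) (hsa : s < a) :
  (mu n m a b s * (1 + s) >= INR n <->
     (forall x, s < x <= a -> psi n m a b s x > 0)) /\
  (mu n m a b s * (1 + s) >= INR n <->
     (forall x, s < x <= a -> Derive (psi n m a b s) x > 0)) /\
  ((exists L : R, filterlim (Derive (psi n m a b s)) (at_right s) (locally L) /\ 0 < L)
     <-> mu n m a b s * (1 + s) > INR n).
Proof.
  destruct n as [|k]; [lia|].
  assert (Epsi : psi (S k) m a b s = Psi k m s (mu (S k) m a b s)).
  { unfold psi, Psi, NN, Iint, P. rewrite Nat.sub_succ, Nat.sub_0_r. reflexivity. }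
  assert (Hmu : 0 < mu (S k) m a b s).
  { unfold mu, Iint. rewrite Nat.sub_succ, Nat.sub_0_r.
    apply Rdiv_lt_0_compat.
    - assert (0 < (1 + a) ^ S k * a ^ m * b).
      { apply Rmult_lt_0_compat; [apply Rmult_lt_0_compat|]; auto; apply pow_lt; lra. }
      assert (0 <= INR (S k) * RInt (fun t => (1 + t) ^ k * t ^ m) s a).
      { apply Rmult_le_pos. apply pos_INR.
        apply RInt_ge_0; [lra | apply (P_exRInt k m) |].
        intros t Ht. apply (P_nonneg k m t); lra. }
      lra.
    - apply (RInt_gt_0 (P (S k) m)); [lra | |].
      + intros; apply P_pos; lra.
      + intros; apply P_cont. }
  rewrite Epsi. set (mu0 := mu (S k) m a b s) in *.
  assert (P1 : mu0 * (1 + s) >= INR (S k) <-> (forall x, s < x <= a -> Psi k m s mu0 x > 0)).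
  { split.
    - intros Hc x Hx. apply Psi_pos; lra.
    - intros H. destruct (Rle_or_lt (INR (S k)) (mu0 * (1 + s))) as [Hc|Hc]; [lra|].
      destruct (Psi_neg k m s mu0 a ltac:(lra) Hmu Hc) as [x [Hx Hneg]].
      specialize (H x Hx). lra. }
  split; [exact P1|]. split.
  - split.
    + intros Hc x Hx. rewrite Psi_derive by lra. apply DPsi_pos; lra.
    + intros H. apply P1. apply (DPsi_imp_Psi k m s mu0 a); try lra.
      intros x Hx. rewrite <- Psi_derive by lra. apply H; auto.
  - split.
    + intros [L [HL HL0]].
      assert (HL2 : 0 < L / 2) by lra.
      destruct (proj1 (filterlim_locally _ _) HL (mkposreal _ HL2)) as [d Hd].
      apply Rlt_gt. apply (lim_pos_imp k m s mu0 L d); auto; [apply cond_pos|].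
      intros y Hy. rewrite <- Psi_derive by lra.
      assert (Hb : ball s d y).
      { change (Rabs (y - s) < d). rewrite Rabs_pos_eq; lra. }
      specialize (Hd y Hb ltac:(lra)). simpl in Hd.
      change (Rabs (Derive (Psi k m s mu0) y - L) < L / 2) in Hd.
      apply Rabs_def2 in Hd. lra.
    + intros Hc.
      destruct (lim_exists k m s mu0 hs0 Hmu ltac:(lra)) as [L [HL HL0]].
      exists L. split; auto.
      apply filterlim_ext_loc with (f := DPsi k m s mu0); auto.
      unfold at_right, within. apply filter_forall. intros y Hy.
      rewrite Psi_derive; auto; lra.
Qed.
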